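(* Let $n\ge 2$. A $(2n-2)\times(2n-2)$ lower triangular matrix $F=(F_{i,j})_{0\le i,j\le 2n-3}$ is the $\mathbf{F}$-matrix of some fully heterochronous ranked tree shape with $n$ leaves if and only if its entries $F_{i,j}$, $0\le j\le i\le 2n-3$, form an $(n,2n-3,2n-3)$ $\mathbf{F}$-sequence.
   Context: A fully heterochronous ranked tree shape with $n$ leaves is a rooted full binary tree (every node has out-degree $0$ or $2$), without leaf labels, with $n$ leaves, together with a total ordering of all $2n-1$ nodes (leaves included) such that nodes appear in increasing order along every path from the root to a leaf; the position of a node in this order, numbered $0,\dots,2n-2$, is its rank. Its $\mathbf{F}$-matrix is the $(2n-2)\times(2n-2)$ lower triangular matrix $F$, indices from $0$ to $2n-3$, where for $0\le j\le i$ the entry $F_{i,j}$ is the number of edges from a parent node $v$ to a child node $w$ with rank of $v$ at most $j$ and rank of $w$ larger than $i$. For a doubly indexed sequence $f$, with the convention $f_{k,\ell}=0$ whenever $k$ or $\ell$ is negative, define $L_f(i,j):=\max(f_{i,j-1}, f_{i-1,j}-1, f_{i,j-1}+f_{i-1,j}-f_{i-1,j-1}-1)$ and $U_f(i,j):=\min(f_{i-1,j}, f_{i,j-1}+f_{i-1,j}-f_{i-1,j-1})$. For non-negative integers $M\le N\le 2n-3$, with $B=\max(N-1,M)$, an $(n,N,M)$ $\mathbf{F}$-sequence is a doubly indexed sequence $f_{i,j}$ of non-negative integers defined exactly for the valid indices $(i,j)\in\{(i,j):0\le j\le i\le N-1\}\cup\{(N,j):0\le j\le M\}$ such that: (1)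 $f_{i,i}$ ($0\le i\le B$) are positive integers with $f_{0,0}=2$, $f_{i,i}=f_{i-1,i-1}\pm1$ for $1\le i\le B$, and $f_{i,i}\le 2n-i-2$ for $0\le i\le B$; (2) $L_f(i,j)\le f_{i,j}\le U_f(i,j)$ for valid $(i,j)$ with $0\le j\le i-2$; (3) for valid $(i,j)$ with $0\le j\le i-1$, if $f_{i-1,j}=f_{i-1,i-1}$ then $f_{i,j}=f_{i-1,i-1}-1$. *)

(* Defs.v *)
From HB Require Import structures.
From mathcomp Require Import all_boot all_order all_algebra.
Set Implicit Arguments. Unset Strict Implicit. Unset Printing Implicit Defensive.
Import Order.TTheory GRing.Theory Num.Theory.

(* Nodes are identified with their ranks 0, ..., 2n-2 (rank 0 = root). *)
(* The tree is encoded by its parent function p: for each non-root     *)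
(* node w (1 <= w <= 2n-2), p w is the rank of its parent.  Values of  *)
(* p outside 1..2n-2 are irrelevant.                                   *)

Definition nchildren (n : nat) (p : nat -> nat) (v : nat) : nat :=
  count (fun w => p w == v) (iota 1 (2 * n - 2)).

Definition is_ranked_tree_shape (n : nat) (p : nat -> nat) : Prop :=
  (forall w, 1 <= w <= 2 * n - 2 -> p w < w)%N /\
  (forall v, v <= 2 * n - 2 -> nchildren n p v = 0 \/ nchildren n p v = 2)%N /\
  count (fun v => nchildren n p v == 0%N) (iota 0 (2 * n - 1)) = n.

(* F-matrix: F_{i,j} = #{edges (v,w) : rank v <= j, rank w > i} for j <= i,
   and 0 above the diagonal (lower triangular). *)
Definition Fmatrix (n : nat) (p : nat -> nat) : 'M[int]_(2 * n - 2) :=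
  \matrix_(i, j) if (j <= i)%N then
                   Posz (count (fun w => (i < w)%N && (p w <= j)%N) (iota 1 (2 * n - 2)))
                 else 0.

Local Open Scope ring_scope.

Definition fz (f : nat -> nat -> int) (i j : int) : int :=
  if (i < 0) || (j < 0) then 0 else f `|i|%N `|j|%N.

Definition Lf (f : nat -> nat -> int) (i j : int) : int :=
  Num.max (fz f i (j - 1))
    (Num.max (fz f (i - 1) j - 1)
             (fz f i (j - 1) + fz f (i - 1) j - fz f (i - 1) (j - 1) - 1)).

Definition Uf (f : nat -> nat -> int) (i j : int) : int :=
  Num.min (fz f (i - 1) j) (fz f i (j - 1) + fz f (i - 1) j - fz f (i - 1) (j - 1)).

Definition valid_idx (N M i j : nat) : bool :=
  ((j <= i)%N && (i < N)%N) || ((i == N) && (j <= M)%N).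

Definition Fsequence (n N M : nat) (f : nat -> nat -> int) : Prop :=
  let B := maxn N.-1 M in
  (M <= N <= 2 * n - 3)%N /\
  (forall i j, valid_idx N M i j -> 0 <= f i j) /\
  (* (1) *)
  (forall i, (i <= B)%N -> 0 < f i i) /\
  f 0%N 0%N = 2 /\
  (forall i, (1 <= i <= B)%N ->
      f i i = f i.-1 i.-1 + 1 \/ f i i = f i.-1 i.-1 - 1) /\
  (forall i, (i <= B)%N -> f i i <= (2 * n)%:Z - i%:Z - 2) /\
  (* (2) *)
  (forall i j, valid_idx N M i j -> (j + 2 <= i)%N ->
      Lf f i j <= f i j <= Uf f i j) /\
  (* (3) *)
  (forall i j, valid_idx N M i j -> (j + 1 <= i)%N ->
      f i.-1 j = f i.-1 i.-1 -> f i j = f i.-1 i.-1 - 1).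

Definition mx_seq (m : nat) (F : 'M[int]_m) (i j : nat) : int :=
  oapp (fun i' : 'I_m => oapp (fun j' : 'I_m => F i' j') 0 (insub j)) 0 (insub i).

Definition lower_triangular (m : nat) (F : 'M[int]_m) : Prop :=
  forall i j : 'I_m, (i < j)%N -> F i j = 0.

(* Main.v *)
Require Import Defs.
From mathcomp Require Import all_boot all_order all_algebra zify.
Import Order.TTheory GRing.Theory Num.Theory.

Definition G (K : nat) (p : nat -> nat) (i j : nat) : nat :=
  count (fun w => (i < w) && (p w <= j)) (iota 1 K).

Lemma count_eqi (s : seq nat) (P : pred nat) i : uniq s -> i \in s ->
  count (fun w => (w == i) && P w) s = P i.
Proof.
move=> us iis.
have -> : count (fun w => (w == i) && P w) s = count (fun w => P i && (w == i)) s.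
  by apply: eq_count => w; case: eqP => [->|]; rewrite ?andbT ?andbF.
case: (P i) => /=; first by rewrite (count_uniq_mem _ us) iis.
by rewrite (@eq_count _ _ pred0) ?count_pred0.
Qed.

Lemma G_step K p i j : (1 <= i <= K)%N -> G K p i.-1 j = (G K p i j + (p i <= j))%N.
Proof.
move=> Hi; rewrite /G.
have -> : count (fun w => (i.-1 < w) && (p w <= j)) (iota 1 K) =
   count (predU (fun w => (i < w) && (p w <= j)) (fun w => (w == i) && (p w <= j))) (iota 1 K).
  apply: eq_count => w /=; case: (p w <= j); rewrite ?andbT ?andbF //.
  case: (ltngtP i w) => H; apply/idP/idP; lia.
apply/eqP; rewrite -(eqn_add2r (count (predI (fun w => (i < w) && (p w <= j)) (fun w => (w == i) && (p w <= j))) (iota 1 K))).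
rewrite count_predUI (@eq_count _ (predI _ _) pred0) ?count_pred0 ?addn0.
  by rewrite count_eqi ?iota_uniq // mem_iota; lia.
by move=> w /=; case: (ltngtP i w) => H //=; rewrite ?andbF //= andbA andbC; case: eqP => //; lia.
Qed.

Lemma G_top K p j : G K p K j = 0%N.
Proof.
rewrite /G (@eq_in_count _ _ pred0) ?count_pred0 // => w; rewrite mem_iota /= => H.
apply/negbTE; lia.
Qed.

Lemma G_mono K p i j j' : (j <= j')%N -> (G K p i j <= G K p i j')%N.
Proof. move=> H; apply: sub_count => w /andP [-> /= h]; lia. Qed.

Lemma G_bound K p i j : (G K p i j <= K - i)%N.
Proof.
case: (leqP K i) => hK.
  rewrite /G (@eq_in_count _ _ pred0) ?count_pred0 // => w; rewrite mem_iota /= => H.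
  apply/negbTE; lia.
have: forall k, (k <= K)%N -> (G K p (K - k) j <= k)%N.
  elim=> [|k IH] hk; first by rewrite subn0 G_top.
  have -> : (K - k.+1 = (K - k).-1)%N by lia.
  rewrite G_step; last by lia.
  have := IH (ltnW hk); lia.
move=> /(_ (K - i)%N); have -> : (K - (K - i) = i)%N by lia.
by apply; lia.
Qed.

Lemma nch_split K p v : (forall w, (1 <= w <= K)%N -> (p w < w)%N) ->
  (count (fun w => p w == v) (iota 1 K) + count (fun w => (v < w) && (p w < v)) (iota 1 K))%N
  = G K p v v.
Proof.
move=> Hp; rewrite /G.
rewrite (@eq_in_count _ (fun w => (v < w) && (p w <= v))
   (predU (fun w => p w == v) (fun w => (v < w) && (p w < v)))); last first.
  move=> w; rewrite mem_iota => hw /=; have := Hp w ltac:(lia).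
  case: (ltngtP (p w) v) => h /=; rewrite ?andbF ?andbT ?orbF ?orbT //; lia.
rewrite -count_predUI (@eq_count _ (predI _ _) pred0) ?count_pred0 ?addn0 //.
by move=> w /=; case: eqP => //= ->; rewrite ltnn andbF.
Qed.

Lemma sum_eq_count (r : seq nat) a : (\sum_(v <- r) (a == v) = count (fun v => v == a) r)%N.
Proof. by elim: r => [|x r IH]; rewrite ?big_nil ?big_cons //= IH eq_sym. Qed.

Lemma sum_count_eq (s : seq nat) (p : nat -> nat) K :
  (\sum_(v <- iota 0 K) count (fun w => p w == v) s = count (fun w => p w < K) s)%N.
Proof.
elim: s => [|x s IH] /=; first by rewrite big1.
rewrite big_split /= IH sum_eq_count.
by rewrite (count_uniq_mem _ (iota_uniq 0 K)) mem_iota.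
Qed.

Lemma sum02 (r : seq nat) (g : nat -> nat) : (forall v, v \in r -> g v = 0 \/ g v = 2)%N ->
  (\sum_(v <- r) g v = 2 * count (fun v => g v != 0) r)%N.
Proof.
elim: r => [|x r IH] H; first by rewrite big_nil.
rewrite big_cons /= IH; last by move=> v hv; apply: H; rewrite inE hv orbT.
have := H x (mem_head _ _); case=> ->; lia.
Qed.
Local Open Scope ring_scope.

Lemma mx_seq_ord m (F : 'M[int]_m) (i j : 'I_m) : mx_seq F i j = F i j.
Proof. by rewrite /mx_seq !valK. Qed.

Lemma mx_seqE m (F : 'M[int]_m) i j (hi : (i < m)%N) (hj : (j < m)%N) :
  mx_seq F i j = F (Ordinal hi) (Ordinal hj).
Proof. by rewrite -mx_seq_ord. Qed.

Lemma mx_seq_out m (F : 'M[int]_m) i j : (m <= i)%N -> mx_seq F i j = 0.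
Proof. move=> h; rewrite /mx_seq (@insubF _ (fun k => k < m)%N _ i) //; by apply/negbTE; rewrite -leqNgt. Qed.

Definition fzj (f : nat -> nat -> int) (a j : nat) : int :=
  if j is j'.+1 then f a j' else 0.

Lemma fzN f (i j : nat) : fz f i j = f i j.
Proof. by rewrite /fz. Qed.

Lemma fz_im1 f (i j : nat) : fz f (Posz i.+1 - 1) j = f i j.
Proof. have -> : Posz i.+1 - 1 = Posz i by lia. exact: fzN. Qed.

Lemma fz_jm1 f (a j : nat) : fz f a (Posz j - 1) = fzj f a j.
Proof.
case: j => [|j] /=; first by rewrite /fz.
have -> : Posz j.+1 - 1 = Posz j by lia. exact: fzN.
Qed.

Lemma fz_both f (i j : nat) : fz f (Posz i.+1 - 1) (Posz j - 1) = fzj f i j.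
Proof. have -> : Posz i.+1 - 1 = Posz i by lia. exact: fz_jm1. Qed.

Lemma Lf_unf f (i j : nat) : Lf f i.+1 j =
  Num.max (fzj f i.+1 j) (Num.max (f i j - 1) (fzj f i.+1 j + f i j - fzj f i j - 1)).
Proof. by rewrite /Lf fz_jm1 fz_im1 fz_both. Qed.

Lemma Uf_unf f (i j : nat) : Uf f i.+1 j =
  Num.min (f i j) (fzj f i.+1 j + f i j - fzj f i j).
Proof. by rewrite /Uf fz_jm1 fz_im1 fz_both. Qed.

Lemma thresh (d : nat -> int) m :
  (forall j, (j <= m)%N -> 0 <= d j <= 1) ->
  (forall j, (j < m)%N -> d j <= d j.+1) -> d m = 1 ->
  let q := find (fun j => d j == 1) (iota 0 m.+1) in
  (q <= m)%N /\ forall j, (j <= m)%N -> d j = Posz (q <= j)%N.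
Proof.
move=> H01 Hmon Hm q.
have hh : has (fun j => d j == 1) (iota 0 m.+1).
  by apply/hasP; exists m; rewrite ?mem_iota ?Hm //=; lia.
have hq : (q < m.+1)%N by rewrite -[m.+1](size_iota 0) -has_find.
have dq : d q = 1.
  by have := nth_find 0%N hh; rewrite -/q nth_iota // add0n => /eqP.
have mono : forall k, (q + k <= m)%N -> d q <= d (q + k)%N.
  elim=> [|k IH] hk; first by rewrite addn0.
  have := IH ltac:(lia); have := Hmon (q + k)%N ltac:(lia); rewrite addnS; lia.
split; first lia.
move=> j hj; case: (leqP q j) => hqj /=.
  have := mono (j - q)%N ltac:(lia); have -> : (q + (j - q) = j)%N by lia.
  have := H01 j hj; lia.
have := before_find 0%N hqj; rewrite nth_iota; last lia.
rewrite add0n => /eqP; have := H01 j hj; lia.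
Qed.

Lemma valid_le N i j : valid_idx N N i j -> ((j <= i)%N && (i <= N)%N).
Proof.
rewrite /valid_idx => /orP [/andP [h1 h2]|/andP [/eqP -> h]]; apply/andP; split => //; lia.
Qed.

Lemma gE n p i j : (j <= i)%N -> (i < 2 * n - 2)%N ->
  mx_seq (Fmatrix n p) i j = Posz (G (2 * n - 2) p i j).
Proof. by move=> h1 h2; rewrite (@mx_seqE _ (Fmatrix n p) i j h2 (leq_ltn_trans h1 h2)) mxE /= h1. Qed.

Lemma forward n p : (2 <= n)%N -> is_ranked_tree_shape n p ->
  Fsequence n (2 * n - 3) (2 * n - 3) (mx_seq (Fmatrix n p)).
Proof.
move=> hn [Hp [Hdeg _]].
have Gs : forall i j, (1 <= i <= 2 * n - 2)%N ->
    G (2 * n - 2) p i.-1 j = (G (2 * n - 2) p i j + (p i <= j))%N.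
  by move=> i j h; apply: G_step.
have nchE : forall v, (1 <= v)%N -> (v <= 2 * n - 2)%N ->
    G (2 * n - 2) p v v = (nchildren n p v + G (2 * n - 2) p v v.-1)%N.
  move=> v h1 h2; rewrite -(nch_split _ _ v Hp) /nchildren; congr (_ + _)%N.
  by apply: eq_count => w; congr (_ && _); case: (v) h1 => //.
have nch0 : G (2 * n - 2) p 0 0 = nchildren n p 0.
  rewrite -(nch_split _ _ 0 Hp) /nchildren (@eq_count _ (fun w => (0 < w) && (p w < 0))%N pred0) ?count_pred0 ?addn0 //.
  by move=> w /=; rewrite ltn0 andbF.
rewrite /Fsequence; cbv zeta.
have hB : maxn (2 * n - 3).-1 (2 * n - 3) = (2 * n - 3)%N by lia.
rewrite hB.
split; first lia.
split.
  move=> i j /valid_le /andP [h1 h2]; rewrite gE //; lia.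
split.
  move=> i hi; rewrite gE //; last lia.
  have := Gs i.+1 i ltac:(lia); have := Hp i.+1 ltac:(lia); simpl.
  lia.
split.
  rewrite gE //; last lia. rewrite nch0.
  have := Hdeg 0%N ltac:(lia); have := Gs 1%N 0%N ltac:(lia); rewrite nch0 /=.
  have := Hp 1%N ltac:(lia); lia.
split.
  move=> i hi; rewrite !gE //; try lia.
  have := nchE i ltac:(lia) ltac:(lia); have := Gs i i.-1 ltac:(lia).
  have := Hp i ltac:(lia); have := Hdeg i ltac:(lia).
  lia.
split.
  move=> i hi; rewrite gE //; last lia.
  have := G_bound (2 * n - 2) p i i; lia.
split.
  move=> i j /valid_le /andP [h1 h2] hij.
  case: i h1 h2 hij => [|i] h1 h2 hij; first lia.
  rewrite Lf_unf Uf_unf !gE //; try lia.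
  have := Gs i.+1 j ltac:(lia); rewrite /=.
  case: j h1 hij => [|j] h1 hij /=.
    rewrite /fzj; lia.
  rewrite !gE //; try lia.
  have := Gs i.+1 j ltac:(lia); rewrite /=.
  have := G_mono (2 * n - 2) p i.+1 j j.+1 (leqnSn j).
  lia.
move=> i j /valid_le /andP [h1 h2] hij.
case: i h1 h2 hij => [|i] h1 h2 hij; first lia.
rewrite /= !gE //; try lia.
have := Gs i.+1 j ltac:(lia); have := Gs i.+1 i ltac:(lia); rewrite /=.
have := G_mono (2 * n - 2) p i.+1 j i ltac:(lia).
have := Hp i.+1 ltac:(lia).
lia.
Qed.

Lemma backward n (F : 'M[int]_(2 * n - 2)) : (2 <= n)%N -> lower_triangular F ->
  Fsequence n (2 * n - 3) (2 * n - 3) (mx_seq F) ->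
  exists p : nat -> nat, is_ranked_tree_shape n p /\ F = Fmatrix n p.
Proof.
move=> hn hF; rewrite /Fsequence; cbv zeta.
have hB : maxn (2 * n - 3).-1 (2 * n - 3) = (2 * n - 3)%N by lia.
rewrite hB => -[_ [Hnn [Hpos [H00 [Hpm [Hbd [H2 H3]]]]]]].
have vld : forall i j, (j <= i <= 2 * n - 3)%N -> valid_idx (2 * n - 3) (2 * n - 3) i j.
  by move=> i j h; rewrite /valid_idx; lia.
have C1 : forall i j, (1 <= i <= 2 * n - 3)%N -> (j + 2 <= i)%N ->
    (0 <= mx_seq F i.-1 j - mx_seq F i j <= 1) /\
    (forall j0, j = j0.+1 -> mx_seq F i.-1 j0 - mx_seq F i j0 <= mx_seq F i.-1 j - mx_seq F i j
                             /\ mx_seq F i j0 <= mx_seq F i j).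
  move=> i j hi hij; have := H2 i j (vld i j ltac:(lia)) hij.
  case: i hi hij => [|i] hi hij; first lia.
  rewrite Lf_unf Uf_unf /=.
  case: j hij => [|j0] hij; rewrite /fzj.
    move=> h; split; first lia. by [].
  move=> h; split; first lia.
  by move=> j1 [<-]; lia.
have C2 : forall i, (1 <= i <= 2 * n - 3)%N -> mx_seq F i i.-1 = mx_seq F i.-1 i.-1 - 1.
  by move=> i hi; apply: H3 => //; [apply: vld | ]; lia.
have Prow : forall i, (i <= 2 * n - 3)%N -> forall j, (j <= i)%N -> mx_seq F i j <= mx_seq F i i.
  elim=> [|i IH] hi j hj.
    by have -> : j = 0%N by lia.
  case: (ltngtP j i.+1) => hji; last by rewrite hji lexx.
    case: (ltngtP j i) => hji'.
      have [h1 _] := C1 i.+1 j ltac:(lia) ltac:(lia); rewrite /= in h1.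
      have := IH ltac:(lia) j ltac:(lia).
      have := Hpm i.+1 ltac:(lia); rewrite /=.
      case: (boolP (mx_seq F i j == mx_seq F i i)) => /eqP e.
        have := H3 i.+1 j (vld i.+1 j ltac:(lia)) ltac:(lia) e; rewrite /=; lia.
      lia.
      lia.
    rewrite hji'; have := C2 i.+1 ltac:(lia); have := Hpm i.+1 ltac:(lia); rewrite /=; lia.
  lia.
have fNN : mx_seq F (2 * n - 3) (2 * n - 3) = 1.
  have := Hbd (2 * n - 3)%N (leqnn _); have := Hpos (2 * n - 3)%N (leqnn _); lia.
have fN1 : mx_seq F (2 * n - 3) (2 * n - 3).-1 = 1.
  have := C2 (2 * n - 3)%N ltac:(lia); have := Hpm (2 * n - 3)%N ltac:(lia).
  have := Hpos (2 * n - 3).-1 ltac:(lia); lia.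
pose D i j := mx_seq F i.-1 j - mx_seq F i j.
pose p w := find (fun j => D w j == 1) (iota 0 w).
have KeyD : forall i, (1 <= i <= 2 * n - 2)%N ->
    (p i <= i.-1)%N /\ forall j, (j <= i.-1)%N -> D i j = Posz (p i <= j)%N.
  case=> [|i] hi; first lia.
  rewrite /=.
  have [h01 hmon hm] : [/\ (forall j, (j <= i)%N -> 0 <= D i.+1 j <= 1),
              (forall j, (j < i)%N -> D i.+1 j <= D i.+1 j.+1) & D i.+1 i = 1].
    case: (ltngtP i.+1 (2 * n - 2)) => hK; last first.
    - have ei : i = (2 * n - 3)%N by lia.
      have D0 : forall j, D i.+1 j = mx_seq F i j.
        by move=> j; rewrite /D /= (@mx_seq_out _ F i.+1 j) ?subr0 //; lia.
      split.
      + move=> j hj; rewrite D0; have := Hnn i j (vld i j ltac:(lia)).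
        have := Prow i ltac:(lia) j hj; rewrite ei fNN; lia.
      + move=> j hj; rewrite !D0.
        case: (leqP (j.+1 + 2) i) => hj2.
          have [_ h] := C1 i j.+1 ltac:(lia) hj2; have [_ h'] := h j erefl; exact: h'.
        have := Prow i ltac:(lia) j ltac:(lia); rewrite ei fNN => hle.
        have [->|->] : j.+1 = (2 * n - 3)%N \/ j.+1 = (2 * n - 3).-1 by lia.
          by rewrite fNN.
        by rewrite fN1.
      + by rewrite D0 ei.
    - lia.
    - split.
      + move=> j hj; rewrite /D /=; case: (leqP (j + 2) i.+1) => hj2.
          by have [h _] := C1 i.+1 j ltac:(lia) hj2; rewrite /= in h.
        have := C2 i.+1 ltac:(lia); rewrite /=; have -> : j = i by lia.
        lia.
      + move=> j hj; rewrite /D /=; case: (leqP (j.+1 + 2) i.+1) => hj2.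
          have [_ h] := C1 i.+1 j.+1 ltac:(lia) hj2; have [h' _] := h j erefl.
          by rewrite /= in h'.
        have [h _] := C1 i.+1 j ltac:(lia) ltac:(lia); rewrite /= in h.
        have := C2 i.+1 ltac:(lia); rewrite /=; have -> : j.+1 = i by lia.
        lia.
      + rewrite /D /=; have := C2 i.+1 ltac:(lia); rewrite /=; lia.
  exact: (thresh (D i.+1) i h01 hmon hm).
have Hp : forall w, (1 <= w <= 2 * n - 2)%N -> (p w < w)%N.
  by move=> w hw; have [h _] := KeyD w hw; lia.
have Geq : forall k i j, (i + k = 2 * n - 2)%N -> (j <= i)%N ->
    Posz (G (2 * n - 2) p i j) = mx_seq F i j.
  elim=> [|k IH] i j hik hji.
    have ei : i = (2 * n - 2)%N by lia.
    by rewrite ei G_top mx_seq_out.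
  have := G_step (2 * n - 2) p i.+1 j ltac:(lia); rewrite /= => ->.
  have := IH i.+1 j ltac:(lia) ltac:(lia).
  have [_ hd] := KeyD i.+1 ltac:(lia); have := hd j hji; rewrite /D /=.
  lia.
have Gf : forall i j, (j <= i <= 2 * n - 2)%N -> Posz (G (2 * n - 2) p i j) = mx_seq F i j.
  by move=> i j h; apply: (Geq (2 * n - 2 - i)%N); lia.
have nchE : forall v, (1 <= v)%N -> (v <= 2 * n - 2)%N ->
    G (2 * n - 2) p v v = (nchildren n p v + G (2 * n - 2) p v v.-1)%N.
  move=> v h1 h2; rewrite -(nch_split _ _ v Hp) /nchildren; congr (_ + _)%N.
  by apply: eq_count => w; congr (_ && _); case: (v) h1 => //.
have nch0 : G (2 * n - 2) p 0 0 = nchildren n p 0.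
  rewrite -(nch_split _ _ 0 Hp) /nchildren (@eq_count _ (fun w => (0 < w) && (p w < 0))%N pred0) ?count_pred0 ?addn0 //.
  by move=> w /=; rewrite ltn0 andbF.
have Hdeg : forall v, (v <= 2 * n - 2)%N -> nchildren n p v = 0%N \/ nchildren n p v = 2%N.
  move=> v hv; case: (posnP v) => [->|hv0].
    have := Gf 0%N 0%N ltac:(lia); rewrite nch0 H00; lia.
  case: (ltngtP v (2 * n - 2)) => [hlt|hgt|heq]; last first.
  - left; rewrite /nchildren (@eq_in_count _ _ pred0) ?count_pred0 // => w.
    rewrite mem_iota => hw; have := Hp w ltac:(lia); move=> h; apply/negbTE; lia.
  - lia.
  have := nchE v hv0 hv; have := Gf v v ltac:(lia); have := Gf v v.-1 ltac:(lia).
  have := C2 v ltac:(lia); have := Hpm v ltac:(lia); lia.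
exists p; split; last first.
  apply/matrixP => i j; rewrite mxE; case: (leqP j i) => h.
    have hh : (j <= i <= 2 * n - 2)%N by have := ltn_ord i; lia.
    by rewrite -mx_seq_ord -(Gf _ _ hh).
  by rewrite (hF i j h).
split; first exact: Hp.
split; first exact: Hdeg.
have S1 : (\sum_(v <- iota 0 (2 * n - 1)) nchildren n p v = 2 * n - 2)%N.
  rewrite /nchildren sum_count_eq (@eq_in_count _ _ predT) ?count_predT ?size_iota // => w.
  rewrite mem_iota => hw /=; have := Hp w ltac:(lia); lia.
rewrite sum02 in S1; last by move=> v; rewrite mem_iota => hv; apply: Hdeg; lia.
have := count_predC (fun v => nchildren n p v == 0%N) (iota 0 (2 * n - 1)).
rewrite size_iota.
have -> : count (predC (fun v => nchildren n p v == 0%N)) (iota 0 (2 * n - 1)) =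
   count (fun v => nchildren n p v != 0%N) (iota 0 (2 * n - 1)) by apply: eq_count.
lia.
Qed.

Local Close Scope ring_scope.

Theorem corollary2 (n : nat) (hn : (2 <= n)%N) (F : 'M[int]_(2 * n - 2))
  (hF : lower_triangular F) :
  (exists p : nat -> nat, is_ranked_tree_shape n p /\ F = Fmatrix n p) <->
  Fsequence n (2 * n - 3) (2 * n - 3) (mx_seq F).
Proof.
split; last exact: backward.
by move=> [p [hp ->]]; apply: forward.
Qed.
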